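(* On $\mathcal{P}(\mathbb{R}^{2m},\mathbb{C})\cap\ker(\Delta_x,\Delta_u)$, equipped with the Fischer inner product, the adjoints of the operators $C,A,S_u,S_x$ are $C^\dagger=A$, $A^\dagger=C$, $S_u^\dagger=S_x$, $S_x^\dagger=S_u$; i.e. for all $P,Q\in\mathcal{P}(\mathbb{R}^{2m},\mathbb{C})\cap\ker(\Delta_x,\Delta_u)$: $[CP,Q]_F=[P,AQ]_F$, $[AP,Q]_F=[P,CQ]_F$, $[S_uP,Q]_F=[P,S_xQ]_F$, $[S_xP,Q]_F=[P,S_uQ]_F$.
   Context: Fix an integer $m>4$. For $x,u\in\mathbb{R}^m$ let $\mathcal{P}(\mathbb{R}^{2m},\mathbb{C})$ be the complex polynomials in $(x,u)$ and $\mathcal{P}_{p,q}$ those of bidegree $(p,q)$. The Fischer inner product is $[P,Q]_F=\overline{P}(\partial_x,\partial_u)Q(x,u)\big|_{x=u=0}$, where $\overline{P}(\partial_x,\partial_u)$ is obtained from $P$ by conjugating the coefficients and replacing each $x_j,u_j$ by $\partial_{x_j},\partial_{u_j}$. Write $|x|^2=\sum x_j^2$, $\langle u,x\rangle=\sum u_jx_j$, $\Delta_x=\sum\partial_{x_j}^2$, $\Delta_u=\sum\partial_{u_j}^2$, $\langle\partial_u,\partial_x\rangle=\sum\partial_{u_j}\partial_{x_j}$, $\langle x,\partial_u\rangle=\sum x_j\partial_{u_j}$, $\langle u,\partial_x\rangle=\sum u_j\partial_{x_j}$, $\ker(D_1,\dots,D_r)=\bigcap\ker D_i$. Every $P\in\mathcal{P}_{p,q}$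 is uniquely $\sum_{a,b\ge0}|x|^{2a}|u|^{2b}H'_{p-2a,q-2b}$ with $H'_{p-2a,q-2b}\in\mathcal{P}_{p-2a,q-2b}\cap\ker(\Delta_x,\Delta_u)$; $\pi_{\mathfrak{s}}P:=H'_{p,q}$. On $\ker(\Delta_x,\Delta_u)$: $S_x=\pi_{\mathfrak{s}}\langle x,\partial_u\rangle$, $S_u=\pi_{\mathfrak{s}}\langle u,\partial_x\rangle$, $A=\pi_{\mathfrak{s}}\langle\partial_u,\partial_x\rangle$, $C=\pi_{\mathfrak{s}}\langle u,x\rangle$. *)

(* Defs.v *)
From HB Require Import structures.
From mathcomp Require Import all_boot all_order all_algebra.
From mathcomp Require Import Rstruct complex.
From mathcomp Require Import mpoly.
From Stdlib Require Import ClassicalEpsilon.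

Set Implicit Arguments.
Unset Strict Implicit.
Unset Printing Implicit Defensive.
Import GRing.Theory Num.Theory.
Local Open Scope ring_scope.

Definition Cplx : numClosedFieldType := (Rdefinitions.R)[i].

(* Polynomials in (x,u) in R^m x R^m, complex coefficients: variables
   0..m-1 are x_1..x_m, variables m..2m-1 are u_1..u_m. *)
Definition Pol (m : nat) := {mpoly Cplx[m + m]}.

Section Ops.
Variable m : nat.

Definition xvar (j : 'I_m) : Pol m := 'X_(lshift m j).
Definition uvar (j : 'I_m) : Pol m := 'X_(rshift m j).
Definition dx (j : 'I_m) (P : Pol m) : Pol m := P^`M(lshift m j).
Definition du (j : 'I_m) (P : Pol m) : Pol m := P^`M(rshift m j).

Definition Lap_x (P : Pol m) : Pol m := \sum_(j < m) dx j (dx j P).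
Definition Lap_u (P : Pol m) : Pol m := \sum_(j < m) du j (du j P).

Definition biharmonic (P : Pol m) : Prop := Lap_x P = 0 /\ Lap_u P = 0.

Definition normx2 : Pol m := \sum_(j < m) xvar j ^+ 2.
Definition normu2 : Pol m := \sum_(j < m) uvar j ^+ 2.
Definition ux : Pol m := \sum_(j < m) uvar j * xvar j.

Definition x_du (P : Pol m) : Pol m := \sum_(j < m) xvar j * du j P.
Definition u_dx (P : Pol m) : Pol m := \sum_(j < m) uvar j * dx j P.
Definition du_dx (P : Pol m) : Pol m := \sum_(j < m) du j (dx j P).
Definition mul_ux (P : Pol m) : Pol m := ux * P.

Definition fischer_decomp (F H : Pol m) : Prop :=
  exists (N : nat) (Hf : nat -> nat -> Pol m),
    (forall a b, biharmonic (Hf a b)) /\ H = Hf 0%N 0%N /\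
    F = \sum_(a < N.+1) \sum_(b < N.+1) normx2 ^+ a * normu2 ^+ b * Hf a b.

Definition pi_s (F : Pol m) : Pol m :=
  epsilon (inhabits 0) (fun H => fischer_decomp F H).

Definition S_x (P : Pol m) : Pol m := pi_s (x_du P).
Definition S_u (P : Pol m) : Pol m := pi_s (u_dx P).
Definition A_op (P : Pol m) : Pol m := pi_s (du_dx P).
Definition C_op (P : Pol m) : Pol m := pi_s (mul_ux P).

(* Fischer inner product [P,Q]_F = conj(P)(d_x,d_u) Q |_{x=u=0}:
   P = sum_alpha c_alpha X^alpha acts as sum_alpha conj(c_alpha) d^alpha. *)
Definition fischer (P Q : Pol m) : Cplx :=
  meval (fun _ => 0)
    (\sum_(mon <- msupp P) (P@_mon)^* *: Q^`M[mon]).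

End Ops.

(* Main.v *)
Require Import Defs.
From HB Require Import structures.
From mathcomp Require Import all_boot all_order all_algebra.
From mathcomp Require Import Rstruct complex.
From mathcomp Require Import mpoly ssrcomplements.
From mathcomp Require Import zify.
From Stdlib Require Import ClassicalEpsilon.
Import GRing.Theory Num.Theory.
Local Open Scope ring_scope.
Lemma mx_decomp (F : fieldType) (n p : nat) (A : 'M[F]_(n,p)) (B : 'M[F]_(p,n)) :
 (forall v : 'rV_n, v *m A = 0 -> (v <= B)%MS -> v = 0) ->
 (forall w : 'rV_p, w *m B = 0 -> (w <= A)%MS -> w = 0) ->
 forall v : 'rV_n, exists k r, k *m A = 0 /\ v = k + r *m B.
Proof.
move=> H1 H2.
have cap0 : forall q r s (X : 'M[F]_(q,s)) (Y : 'M[F]_(r,s)),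
  (forall v : 'rV_s, (v <= X)%MS -> (v <= Y)%MS -> v = 0) -> \rank (X :&: Y)%MS = 0%N.
  move=> q r s X Y H; apply/eqP; rewrite mxrank_eq0; apply/eqP/row_matrixP => i.
  rewrite row0; apply: H.
    exact: submx_trans (row_sub i _) (capmxSl _ _).
  exact: submx_trans (row_sub i _) (capmxSr _ _).
have h1 : \rank (kermx A :&: B)%MS = 0%N.
  by apply: cap0 => v; rewrite sub_kermx => /eqP; apply: H1.
have h2 : \rank (A :&: kermx B)%MS = 0%N.
  by apply: cap0 => v hA; rewrite sub_kermx => /eqP hB; apply: H2.
have hr : (\rank A <= \rank B)%N.
  by have := mxrank_mul_ker A B; rewrite h2 addn0 => <-; exact: mxrankM_maxr.
have full : row_full (kermx A + B)%MS.
  rewrite /row_full eqn_leq rank_leq_col /=.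
  have := mxrank_sum_cap (kermx A) B; rewrite h1 addn0 mxrank_ker => ->.
  have := rank_leq_row A; lia.
move=> v; have /sub_addsmxP [[u1 u2] /= ->] := submx_full v full.
exists (u1 *m kermx A), u2; split => //.
by rewrite -mulmxA mulmx_ker mulmx0.
Qed.
Section Fis.
Variable m : nat.
Local Notation PP := (Pol m).

Definition wt (mon : 'X_{1..m+m}) : nat := (\prod_(i < m+m) (mon i)`!)%N.

Lemma wt_gt0 mon : (0 < wt mon)%N.
Proof. by rewrite /wt prodn_gt0 // => i; rewrite fact_gt0. Qed.

Lemma prod0X (mon : 'X_{1..m+m}) :
  \prod_(i < m+m) (0 : Cplx) ^+ (mon i) = (mon == 0%MM)%:R.
Proof.
case: eqP => [->|ne].
  by rewrite big1 // => i _; rewrite mnm0E expr0.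
have [i hi] : exists i, mon i != 0%N.
  apply/existsP; apply: contraR (introN eqP ne) => /existsPn h.
  by apply/eqP/mnmP => i; rewrite mnm0E; have := h i; rewrite negbK => /eqP.
by rewrite (bigD1 i) //= expr0n (negbTE hi) mul0r.
Qed.

Lemma meval0c (p : PP) : meval (fun _ => 0) p = p@_0%MM.
Proof.
rewrite mevalE.
under eq_bigr do rewrite prod0X.
case: (boolP (0%MM \in msupp p)) => h.
  rewrite (bigD1_seq 0%MM) ?msupp_uniq //= eqxx mulr1 big1 ?addr0 // => i /negbTE ->.
  by rewrite mulr0.
rewrite (memN_msupp_eq0 h) big1_seq // => i /andP [_ hi]; case: eqP => [e|]; last by rewrite mulr0.
by move: h; rewrite -e hi.
Qed.

Lemma fischerE (P Q : PP) :
  fischer P Q = \sum_(mon <- msupp P) (P@_mon)^* * (Q@_mon *+ wt mon).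
Proof.
rewrite /fischer raddf_sum /=; apply: eq_bigr => mon _.
rewrite mevalZ meval0c mcoeff_mderivm addm0; congr (_ * (_ *+ _)).
by apply: eq_bigr => i _; rewrite ffactnn.
Qed.

Lemma fischerwE k (P Q : PP) : (msize P <= k)%N ->
  fischer P Q = \sum_(mon : 'X_{1..(m+m) < k}) (P@_mon)^* * (Q@_mon *+ wt mon).
Proof.
move=> lek; pose I : subFinType _ := 'X_{1..(m+m) < k}.
rewrite fischerE (big_mksub I) /=; first last.
  by move=> x /msize_mdeg_lt/leq_trans/(_ lek).
  by rewrite msupp_uniq.
rewrite big_rmcond //= => j /memN_msupp_eq0 ->.
by rewrite rmorph0 mul0r.
Qed.

Lemma fischerDl (P1 P2 Q : PP) : fischer (P1 + P2) Q = fischer P1 Q + fischer P2 Q.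
Proof.
pose k := maxn (msize P1) (msize P2).
rewrite !(@fischerwE k) ?leq_maxl ?leq_maxr ?msizeD_le // -big_split /=.
by apply: eq_bigr => i _; rewrite mcoeffD rmorphD mulrDl.
Qed.

Lemma fischerZl c (P Q : PP) : fischer (c *: P) Q = c^* * fischer P Q.
Proof.
rewrite !(@fischerwE (msize P)) ?msizeZ_le // mulr_sumr.
by apply: eq_bigr => i _; rewrite mcoeffZ rmorphM mulrA.
Qed.

Lemma fischerDr (P Q1 Q2 : PP) : fischer P (Q1 + Q2) = fischer P Q1 + fischer P Q2.
Proof.
rewrite !fischerE -big_split /=.
by apply: eq_bigr => i _; rewrite mcoeffD mulrnDl mulrDr.
Qed.

Lemma fischerZr c (P Q : PP) : fischer P (c *: Q) = c * fischer P Q.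
Proof.
rewrite !fischerE mulr_sumr.
by apply: eq_bigr => i _; rewrite mcoeffZ -mulrnAr mulrCA.
Qed.

Lemma fischer0l (Q : PP) : fischer 0 Q = 0.
Proof. by rewrite fischerE msupp0 big_nil. Qed.

Lemma fischer0r (P : PP) : fischer P 0 = 0.
Proof. by rewrite fischerE big1 // => i _; rewrite mcoeff0 mul0rn mulr0. Qed.

Lemma fischer_suml I (r : seq I) (F : I -> PP) (Q : PP) :
  fischer (\sum_(i <- r) F i) Q = \sum_(i <- r) fischer (F i) Q.
Proof.
exact: (big_morph (fun P => fischer P Q) (fun a b => fischerDl a b Q) (fischer0l Q)).
Qed.

Lemma fischer_sumr I (r : seq I) (F : I -> PP) (P : PP) :
  fischer P (\sum_(i <- r) F i) = \sum_(i <- r) fischer P (F i).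
Proof.
exact: (big_morph (fun Q => fischer P Q) (fischerDr P) (fischer0r P)).
Qed.

Lemma fischerC (P Q : PP) : fischer Q P = (fischer P Q)^*.
Proof.
pose k := maxn (msize P) (msize Q).
rewrite !(@fischerwE k) ?leq_maxl ?leq_maxr // rmorph_sum /=.
by apply: eq_bigr => i _; rewrite rmorphM rmorphMn /= conjCK mulrnAr mulrnAr mulrC.
Qed.

Lemma fischer_ge0 (P : PP) : 0 <= fischer P P.
Proof.
rewrite fischerE; apply: sumr_ge0 => i _.
by rewrite mulrnAr mulrC mulrn_wge0 // mul_conjC_ge0.
Qed.

Lemma fischer_eq0 (P : PP) : fischer P P = 0 -> P = 0.
Proof.
move=> h; apply/eqP; rewrite -msupp_eq0; apply/eqP.
case E: (msupp P) => [|mon s] //.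
have hm : mon \in msupp P by rewrite E mem_head.
move: h; rewrite fischerE => /eqP; rewrite psumr_eq0; last first.
  by move=> i _; rewrite mulrnAr mulrC mulrn_wge0 // mul_conjC_ge0.
move=> /allP /(_ mon hm) /=; rewrite mulrnAr mulrC mulrn_eq0.
rewrite mul_conjC_eq0 -[wt mon == 0%N]negbK -lt0n wt_gt0 /=.
by move: hm; rewrite mcoeff_msupp => /negbTE ->.
Qed.

Lemma wtU i a : wt (U_(i) + a)%MM = ((a i).+1 * wt a)%N.
Proof.
rewrite /wt (bigD1 i) //= [in RHS](bigD1 i) //= mnmDE mnm1E eqxx add1n factS -mulnA.
do 2 f_equal; apply: eq_bigr => j hj.
by rewrite mnmDE mnm1E eq_sym (negbTE hj) add0n.
Qed.

Lemma fischerXX a b : fischer ('X_[a] : PP) 'X_[b] = (a == b)%:R *+ wt a.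
Proof. by rewrite fischerE msuppX big_seq1 !mcoeffX eqxx rmorph_nat mul1r eq_sym. Qed.

Lemma fischerMX_mon i a b :
  fischer ('X_i * 'X_[a] : PP) 'X_[b] = fischer 'X_[a] (('X_[b] : PP)^`M(i)).
Proof.
rewrite -mpolyXD mderivX fischerZr !fischerXX.
case: (eqVneq (U_(i) + a)%MM b) => [<-|ne].
  rewrite [(U_(i) + a)%MM]addmC addmK eqxx mnmDE mnm1E eqxx addn1.
  by rewrite [(a + U_(i))%MM]addmC wtU /= !mulr1n natrM.
case: (eqVneq a (b - U_(i))%MM) => [ea|]; last by move=> _; rewrite /= !mul0rn mulr0.
have bi0 : b i = 0%N.
  apply/eqP; apply: contraNT ne => hb.
  have le : (U_(i) <= b)%MM by rewrite lep1mP.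
  by rewrite ea addmC submK.
by rewrite bi0 /= ?mulr0n ?mul0rn ?mul0r.
Qed.

Lemma fischerMX i (R Q : PP) : fischer ('X_i * R) Q = fischer R (Q^`M(i)).
Proof.
rewrite [R]mpolyE [Q]mpolyE mulr_sumr !fischer_suml raddf_sum /=.
apply: eq_bigr => a _; rewrite !fischer_sumr; apply: eq_bigr => b _.
by rewrite -scalerAr !fischerZl mderivZ !fischerZr fischerMX_mon.
Qed.

End Fis.
Arguments fischerE {m}. Arguments fischerwE {m}. Arguments fischerDl {m}.
Arguments fischerZl {m}. Arguments fischerDr {m}. Arguments fischerZr {m}.
Arguments fischer0l {m}. Arguments fischer0r {m}. Arguments fischer_suml {m}.
Arguments fischer_sumr {m}. Arguments fischerC {m}. Arguments fischer_ge0 {m}.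
Arguments fischer_eq0 {m}. Arguments fischerMX {m}.
Section Lin.
Variable m : nat.
Local Notation PP := (Pol m).
Local Notation BT b := (bmultinom (m+m) b).

Lemma Lapx_lin a (P Q : PP) : Lap_x (a *: P + Q) = a *: Lap_x P + Lap_x Q.
Proof.
rewrite /Lap_x /dx scaler_sumr -big_split; apply: eq_bigr => j _.
by rewrite !mderivD !mderivZ.
Qed.

Lemma Lapu_lin a (P Q : PP) : Lap_u (a *: P + Q) = a *: Lap_u P + Lap_u Q.
Proof.
rewrite /Lap_u /du scaler_sumr -big_split; apply: eq_bigr => j _.
by rewrite !mderivD !mderivZ.
Qed.

Lemma Lapx0 : Lap_x (0 : PP) = 0.
Proof. by rewrite /Lap_x big1 // => j _; rewrite /dx !mderiv0. Qed.

Lemma Lapu0 : Lap_u (0 : PP) = 0.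
Proof. by rewrite /Lap_u big1 // => j _; rewrite /du !mderiv0. Qed.

Lemma fischer_nx2 (R Q : PP) : fischer (normx2 m * R) Q = fischer R (Lap_x Q).
Proof.
rewrite /normx2 mulr_suml fischer_suml /Lap_x fischer_sumr; apply: eq_bigr => j _.
by rewrite expr2 -mulrA /xvar !fischerMX.
Qed.

Lemma fischer_nu2 (R Q : PP) : fischer (normu2 m * R) Q = fischer R (Lap_u Q).
Proof.
rewrite /normu2 mulr_suml fischer_suml /Lap_u fischer_sumr; apply: eq_bigr => j _.
by rewrite expr2 -mulrA /uvar !fischerMX.
Qed.

Lemma msize_le (p : PP) k :
  (forall mon, mon \in msupp p -> (mdeg mon < k)%N) -> (msize p <= k)%N.
Proof.
move=> H; rewrite msizeE big_seq; apply: (big_ind (fun x => x <= k)%N) => //.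
  by move=> x y hx hy; rewrite geq_max hx hy.
Qed.

Lemma msize_der i (p : PP) : (msize (p^`M(i)) <= (msize p).-1)%N.
Proof.
apply: msize_le => mon; rewrite mcoeff_msupp mcoeff_deriv => h.
have hm : (mon + U_(i))%MM \in msupp p.
  by rewrite mcoeff_msupp; apply: contraNneq h => ->; rewrite mul0rn.
have := msize_mdeg_lt hm; rewrite mdegD mdeg1; lia.
Qed.

Lemma msize_mulX i (p : PP) : (msize ('X_i * p) <= (msize p).+1)%N.
Proof.
rewrite mulrC; apply: msize_le => mon; rewrite (perm_mem (msuppMX _ _)).
case/mapP => m' hm' ->; rewrite mdegD mdeg1; have := msize_mdeg_lt hm'; lia.
Qed.

Lemma msize_sumle I (r : seq I) (F : I -> PP) k :
  (forall i, (msize (F i) <= k)%N) -> (msize (\sum_(i <- r) F i) <= k)%N.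
Proof.
move=> H; apply: leq_trans (msize_sum _ _ _) _.
apply: (big_ind (fun x => x <= k)%N) => //.
by move=> x y hx hy; rewrite geq_max hx hy.
Qed.

Lemma msize_Lapx (p : PP) : (msize (Lap_x p) <= (msize p).-2)%N.
Proof.
apply: msize_sumle => j; have h1 := msize_der (lshift m j) p.
have h2 := msize_der (lshift m j) (p^`M(lshift m j)); rewrite /dx.
move: h1 h2; rewrite -!subn1; lia.
Qed.

Lemma msize_Lapu (p : PP) : (msize (Lap_u p) <= (msize p).-2)%N.
Proof.
apply: msize_sumle => j; have h1 := msize_der (rshift m j) p.
have h2 := msize_der (rshift m j) (p^`M(rshift m j)); rewrite /du.
move: h1 h2; rewrite -!subn1; lia.
Qed.

Lemma msize_nx2 (R : PP) k : (msize R <= k.-2)%N -> (msize (normx2 m * R) <= k)%N.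
Proof.
case: (eqVneq R 0) => [->|nz]; first by rewrite mulr0 msize0.
have : (0 < msize R)%N by rewrite lt0n msize_poly_eq0.
move=> h0 hk; rewrite /normx2 mulr_suml; apply: msize_sumle => j.
rewrite expr2 -mulrA /xvar; have := msize_mulX (lshift m j) R.
have := msize_mulX (lshift m j) ('X_(lshift m j) * R).
move: h0 hk; rewrite -!subn1; lia.
Qed.

Lemma msize_nu2 (R : PP) k : (msize R <= k.-2)%N -> (msize (normu2 m * R) <= k)%N.
Proof.
case: (eqVneq R 0) => [->|nz]; first by rewrite mulr0 msize0.
have : (0 < msize R)%N by rewrite lt0n msize_poly_eq0.
move=> h0 hk; rewrite /normu2 mulr_suml; apply: msize_sumle => j.
rewrite expr2 -mulrA /uvar; have := msize_mulX (rshift m j) R.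
have := msize_mulX (rshift m j) ('X_(rshift m j) * R).
move: h0 hk; rewrite -!subn1; lia.
Qed.

Definition emb b (v : 'rV[Cplx]_#|{: BT b}|) : PP :=
  \sum_(i : BT b) v 0 (enum_rank i) *: 'X_[val i].
Definition crd b (F : PP) : 'rV[Cplx]_#|{: BT b}| := \row_j F@_(val (enum_val j)).

Lemma emb_msize b v : (msize (emb b v) <= b)%N.
Proof.
apply: msize_sumle => i; apply: leq_trans (msizeZ_le _ _) _.
by rewrite msizeX; exact: bmdeg.
Qed.

Lemma crd_emb b v : crd b (emb b v) = v.
Proof.
apply/rowP => j; rewrite mxE /emb raddf_sum /= (bigD1 (enum_val j)) //=.
rewrite mcoeffZ mcoeffX eqxx mulr1 enum_valK big1 ?addr0 // => i hi.
by rewrite mcoeffZ mcoeffX (inj_eq val_inj) (negbTE hi) mulr0.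
Qed.

Lemma emb_crd b (F : PP) : (msize F <= b)%N -> emb b (crd b F) = F.
Proof.
move=> h; rewrite [RHS](mpolywE h); apply: eq_bigr => i _.
by rewrite mxE enum_rankK.
Qed.

Lemma emb_lin b a u v : emb b (a *: u + v) = a *: emb b u + emb b v.
Proof.
rewrite /emb scaler_sumr -big_split; apply: eq_bigr => i _.
by rewrite !mxE scalerDl scalerA.
Qed.

Lemma crd_lin b a (P Q : PP) : crd b (a *: P + Q) = a *: crd b P + crd b Q.
Proof. by apply/rowP => j; rewrite !mxE mcoeffD mcoeffZ. Qed.

Lemma emb0 b : emb b 0 = 0.
Proof. by rewrite /emb big1 // => i _; rewrite mxE scale0r. Qed.

Lemma crd0 b : crd b 0 = 0.
Proof. by apply/rowP => j; rewrite !mxE mcoeff0. Qed.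

Lemma crd_inj b (F : PP) : (msize F <= b)%N -> crd b F = 0 -> F = 0.
Proof. by move=> h e; rewrite -(@emb_crd b F h) e emb0. Qed.

End Lin.
Arguments Lapx_lin {m}. Arguments Lapu_lin {m}. Arguments fischer_nx2 {m}.
Arguments fischer_nu2 {m}. Arguments msize_le {m}. Arguments msize_der {m}.
Arguments msize_mulX {m}. Arguments msize_sumle {m}. Arguments msize_Lapx {m}.
Arguments msize_Lapu {m}. Arguments msize_nx2 {m R k}. Arguments msize_nu2 {m R k}.
Arguments emb_msize {m b}. Arguments crd_emb {m b}. Arguments emb_crd {m b F}.
Arguments crd_inj {m b F}.
Section LinMx.
Variables (p q : nat) (f : 'rV[Cplx]_p -> 'rV[Cplx]_q).
Hypothesis hf : forall a u v, f (a *: u + v) = a *: f u + f v.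
Let lf : linear f. Proof. by move=> a u v; rewrite hf. Qed.
HB.instance Definition _ := GRing.isLinear.Build Cplx _ _ *:%R f lf.
Lemma lin_mxE u : u *m lin1_mx f = f u. Proof. exact: mul_rV_lin1. Qed.
End LinMx.

Section Dec.
Variable m : nat.
Local Notation PP := (Pol m).
Local Notation BT b := (bmultinom (m+m) b).

Lemma embD b u v : emb m b (u + v) = emb m b u + emb m b v.
Proof. by have := @emb_lin m b 1 u v; rewrite !scale1r. Qed.

Lemma leq_pred2 {a c : nat} : (a <= c)%N -> (a.-2 <= c.-2)%N.
Proof. by rewrite -!subn1; lia. Qed.

Lemma decomp1 (F : PP) : exists H R1 R2, biharmonic H /\
  F = H + normx2 m * R1 + normu2 m * R2 /\
  (msize R1 <= (msize F).-2)%N /\ (msize R2 <= (msize F).-2)%N.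
Proof.
set b := msize F; set b' := b.-2.
pose f := fun v : 'rV[Cplx]_#|{: BT b}| =>
  row_mx (crd m b' (Lap_x (emb m b v))) (crd m b' (Lap_u (emb m b v))).
pose g := fun r : 'rV[Cplx]_(#|{: BT b'}| + #|{: BT b'}|) =>
  crd m b (normx2 m * emb m b' (lsubmx r) + normu2 m * emb m b' (rsubmx r)).
have flin : forall a u v, f (a *: u + v) = a *: f u + f v.
  move=> a u v; rewrite /f emb_lin Lapx_lin Lapu_lin !crd_lin.
  by rewrite scale_row_mx add_row_mx.
have glin : forall a u v, g (a *: u + v) = a *: g u + g v.
  move=> a u v; rewrite /g -crd_lin; apply: f_equal.
  rewrite !linearD !linearZ /= !emb_lin !mulrDr -!scalerAr.
  by rewrite addrACA.
have hA := @lin_mxE _ _ f flin; have hB := @lin_mxE _ _ g glin.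
have hK : forall r, (msize (normx2 m * emb m b' (lsubmx r) + normu2 m * emb m b' (rsubmx r)) <= b)%N.
  move=> r; apply: leq_trans (msizeD_le _ _) _; rewrite geq_max.
  by rewrite msize_nx2 ?msize_nu2 // emb_msize.
have hL : forall P : PP, (msize P <= b)%N ->
    (msize (Lap_x P) <= b')%N /\ (msize (Lap_u P) <= b')%N.
  move=> P hP; split.
    exact: leq_trans (msize_Lapx P) (leq_pred2 hP).
  exact: leq_trans (msize_Lapu P) (leq_pred2 hP).
have H1 : forall v : 'rV[Cplx]_#|{: BT b}|, v *m lin1_mx f = 0 -> (v <= lin1_mx g)%MS -> v = 0.
  move=> v hv hvB; have [r ev] := submxP hvB; move: hv; rewrite ev hB hA /f /g.
  set K := normx2 m * _ + _; rewrite (emb_crd (hK r)).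
  move/eqP; rewrite -row_mx0 => /eqP /eq_row_mx [hx hu].
  have [hLx hLu] := hL K (hK r).
  move: (crd_inj hLx hx) (crd_inj hLu hu) => ex eu.
  have : fischer K K = 0.
    by rewrite {1}/K fischerDl fischer_nx2 fischer_nu2 ex eu !fischer0r addr0.
  by move/fischer_eq0 => ->; rewrite crd0.
have H2 : forall w : 'rV[Cplx]_(#|{: BT b'}| + #|{: BT b'}|), w *m lin1_mx g = 0 -> (w <= lin1_mx f)%MS -> w = 0.
  move=> w hw hwA; have [v ev] := submxP hwA; move: hw; rewrite ev hA hB /g /f row_mxKl row_mxKr.
  have hV := emb_msize v; have [h1 h2] := hL _ hV.
  rewrite !emb_crd // => hz.
  set V := emb m b v in h1 h2 hz *.
  set W1 := Lap_x V in h1 hz *; set W2 := Lap_u V in h2 hz *.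
  have hW : normx2 m * W1 + normu2 m * W2 = 0.
    apply: crd_inj hz; apply: leq_trans (msizeD_le _ _) _.
    by rewrite geq_max msize_nx2 ?msize_nu2.
  have e : fischer W1 W1 + fischer W2 W2 = 0.
    by rewrite {2}/W1 {2}/W2 -fischer_nx2 -fischer_nu2 -fischerDl hW fischer0l.
  move/eqP: e; rewrite paddr_eq0 ?fischer_ge0 //.
  case/andP => /eqP /fischer_eq0 e1 /eqP /fischer_eq0 e2.
  by rewrite e1 e2 !crd0 row_mx0.
have [k [r [hk e]]] := @mx_decomp _ _ _ (lin1_mx f) (lin1_mx g) H1 H2 (crd m b F).
have hk' := hk; rewrite hA /f in hk'.
move/eqP: hk'; rewrite -row_mx0 => /eqP /eq_row_mx [hx hu].
have [l1 l2] := hL _ (emb_msize k).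
exists (emb m b k), (emb m b' (lsubmx r)), (emb m b' (rsubmx r)).
split; first by split; [exact: crd_inj l1 hx | exact: crd_inj l2 hu].
split; last by split; exact: emb_msize.
have := congr1 (emb m b) e; rewrite (emb_crd (leqnn b)) embD hB /g emb_crd ?hK // => ->.
by rewrite addrA.
Qed.
End Dec.
Section Main.
Variable m : nat.
Local Notation PP := (Pol m).

Definition SS A B (Hf : nat -> nat -> PP) : PP :=
  \sum_(a < A) \sum_(b < B) normx2 m ^+ a * normu2 m ^+ b * Hf a b.

Definition FD (F : PP) := exists N (Hf : nat -> nat -> PP),
  (forall a b, biharmonic (Hf a b)) /\
  forall A B, (N < A)%N -> (N < B)%N -> F = SS A B Hf.

Lemma bih0 : biharmonic (0 : PP).
Proof. by split; rewrite ?Lapx0 ?Lapu0. Qed.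

Lemma bihD (P Q : PP) : biharmonic P -> biharmonic Q -> biharmonic (P + Q).
Proof.
case=> p1 p2 [q1 q2]; split.
  by have := Lapx_lin 1 P Q; rewrite !scale1r p1 q1 addr0.
by have := Lapu_lin 1 P Q; rewrite !scale1r p2 q2 addr0.
Qed.

Lemma FD_bih H : biharmonic H -> FD H.
Proof.
move=> bh; exists 0%N, (fun a b => if (a == 0%N) && (b == 0%N) then H else 0).
split=> [a b|A B hA hB]; first by case: ifP => _ //; exact: bih0.
case: A hA => // A _; case: B hB => // B _.
rewrite /SS big_ord_recl big_ord_recl /= !expr0 !mul1r.
rewrite big1 ?addr0; last by move=> i _; rewrite /= mulr0.
by rewrite big1 ?addr0 // => i _; rewrite big1 // => j _; rewrite /= mulr0.
Qed.

Lemma FD_add P Q : FD P -> FD Q -> FD (P + Q).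
Proof.
case=> [N1 [H1 [b1 e1]]] [N2 [H2 [b2 e2]]].
exists (maxn N1 N2), (fun a b => H1 a b + H2 a b); split=> [a b|A B hA hB].
  exact: bihD.
rewrite (e1 A B) ?(e2 A B); try by apply: leq_ltn_trans _ hA; rewrite leq_max leqnn ?orbT.
all: try by apply: leq_ltn_trans _ hB; rewrite leq_max leqnn ?orbT.
rewrite /SS -big_split; apply: eq_bigr => a _; rewrite -big_split.
by apply: eq_bigr => b _; rewrite mulrDr.
Qed.

Lemma FD_nx2 R : FD R -> FD (normx2 m * R).
Proof.
case=> [N [Hf [bh e]]].
exists N.+1, (fun a b => if a is a'.+1 then Hf a' b else 0); split=> [a b|A B hA hB].
  by case: a => [|a] //; exact: bih0.
case: A hA => // A hA.
rewrite /SS big_ord_recl /= big1 ?add0r; last by move=> j _; rewrite mulr0.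
rewrite (e A B) //; last by apply: ltn_trans hB.
rewrite /SS mulr_sumr; apply: eq_bigr => a _; rewrite mulr_sumr.
by apply: eq_bigr => b _; rewrite exprS !mulrA.
Qed.

Lemma FD_nu2 R : FD R -> FD (normu2 m * R).
Proof.
case=> [N [Hf [bh e]]].
exists N.+1, (fun a b => if b is b'.+1 then Hf a b' else 0); split=> [a b|A B hA hB].
  by case: b => [|b] //; exact: bih0.
case: B hB => // B hB.
rewrite (e A B) //; last by apply: ltn_trans hA.
rewrite /SS mulr_sumr; apply: eq_bigr => a _.
rewrite big_ord_recl /= mulr0 add0r mulr_sumr; apply: eq_bigr => b _.
by rewrite exprS !mulrA [normu2 m * _]mulrC.
Qed.

Lemma FD_all (F : PP) : FD F.
Proof.
elim: (msize F).+1 {-2}F (ltnSn (msize F)) => [//|k IH] {}F hF.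
case: (eqVneq F 0) => [->|nz]; first exact: FD_bih bih0.
have hpos : (0 < msize F)%N by rewrite lt0n msize_poly_eq0.
have [H [R1 [R2 [bh [e [h1 h2]]]]]] := @decomp1 m F.
rewrite e; apply: FD_add; first apply: FD_add.
- exact: FD_bih.
- apply/FD_nx2/IH; move: h1 hF hpos; rewrite -!subn1; lia.
- apply/FD_nu2/IH; move: h2 hF hpos; rewrite -!subn1; lia.
Qed.

Lemma pi_s_spec (F : PP) : fischer_decomp F (pi_s F).
Proof.
rewrite /pi_s; apply: epsilon_spec.
have [N [Hf [bh e]]] := FD_all F.
exists (Hf 0%N 0%N), N, Hf; split=> //; split=> //; exact: e.
Qed.

Lemma fd_key (F H Q : PP) : fischer_decomp F H -> biharmonic Q ->
  fischer F Q = fischer H Q.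
Proof.
case=> N [Hf [bh [-> ->]]] [qx qu].
rewrite fischer_suml big_ord_recl fischer_suml big_ord_recl /=.
rewrite [X in _ + X + _ = _]big1 ?addr0; last first.
  by move=> j _; rewrite /= expr0 mul1r exprS -mulrA fischer_nu2 qu fischer0r.
rewrite big1 ?addr0 ?expr0 ?mul1r // => i _.
rewrite fischer_suml big1 // => j _.
by rewrite /= exprS -!mulrA fischer_nx2 qx fischer0r.
Qed.

Lemma pi_l (F Q : PP) : biharmonic Q -> fischer (pi_s F) Q = fischer F Q.
Proof. by move=> hQ; rewrite (fd_key _ _ _ (pi_s_spec F) hQ). Qed.

Lemma pi_r (P F : PP) : biharmonic P -> fischer P (pi_s F) = fischer P F.
Proof. by move=> hP; rewrite fischerC pi_l // -fischerC. Qed.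

Lemma id1 (P Q : PP) : biharmonic P -> biharmonic Q ->
  fischer (C_op P) Q = fischer P (A_op Q).
Proof.
move=> hP hQ; rewrite /C_op /A_op pi_l // pi_r // /mul_ux /ux mulr_suml.
rewrite fischer_suml /du_dx fischer_sumr; apply: eq_bigr => j _.
by rewrite /uvar /xvar -mulrA !fischerMX /du /dx mderiv_comm.
Qed.

Lemma id3 (P Q : PP) : biharmonic P -> biharmonic Q ->
  fischer (S_u P) Q = fischer P (S_x Q).
Proof.
move=> hP hQ; rewrite /S_u /S_x pi_l // pi_r // /u_dx /x_du.
rewrite fischer_suml fischer_sumr; apply: eq_bigr => j _.
by rewrite /uvar /xvar fischerMX [RHS]fischerC fischerMX -fischerC.
Qed.

End Main.

Theorem proposition6p1 (m : nat) (hm : (4 < m)%N) (P Q : Pol m) :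
  biharmonic P -> biharmonic Q ->
  [/\ fischer (C_op P) Q = fischer P (A_op Q),
      fischer (A_op P) Q = fischer P (C_op Q),
      fischer (S_u P) Q = fischer P (S_x Q)
    & fischer (S_x P) Q = fischer P (S_u Q)].
Proof.
move=> hP hQ; split.
- exact: id1.
- by rewrite fischerC -(@id1 m Q P hQ hP) -fischerC.
- exact: id3.
- by rewrite fischerC -(@id3 m Q P hQ hP) -fischerC.
Qed.
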